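(* Let $Q_x$ be a full-dimensional rational polytope in $\mathbb{R}^m$, $m\ge2$; let $H^1\subseteq\mathbb{R}^m$ be a hyperplane with $Q_x^1:=H^1\cap Q_x\neq\emptyset$; let $H\neq H^1$ be a hyperplane supporting a nonempty face of $Q_x^1$, and let $\bar H$ be the closed half-space bounded by $H$ not containing $Q_x^1$. Then for every point $\bar x$ in the relative interior of $\bar H\cap H^1$, $$d(\bar x,Q_x)\ge d(\bar x,H\cap H^1)\cdot\sin\theta(Q_x,H^1,\bar H).$$
   Context: Such a $(Q_x,H^1,\bar H)$ is called a triplet. $\theta(Q_x,H^1,\bar H)$ denotes the maximum, over all hyperplanes $H^*\subseteq\mathbb{R}^m$ with $H^*\cap H^1=H\cap H^1$ that separate $\mathrm{int}(Q_x)$ from $\bar H\cap H^1$, of the angle (in $[0,\pi/2]$) between $H^1$ and $H^*$; such hyperplanes exist and the maximum is attained. $d$ denotes Euclidean distance, with $d(x,S)=\inf_{y\in S}d(x,y)$. *)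

(* Defs.v *)
From HB Require Import structures.
From mathcomp Require Import all_boot all_order all_algebra.
From mathcomp Require Import all_classical all_reals all_analysis.
Set Implicit Arguments. Unset Strict Implicit. Unset Printing Implicit Defensive.
Import Order.TTheory GRing.Theory Num.Theory.
Local Open Scope classical_set_scope.
Local Open Scope ring_scope.

Section Geom.
Variables (R : realType) (m : nat).
Implicit Types (u v x y : 'rV[R]_m) (S : set 'rV[R]_m).

Definition dot u v : R := \sum_(i < m) u ord0 i * v ord0 i.
Definition enorm u : R := Num.sqrt (dot u u).
Definition edist x y : R := enorm (x - y).

Definition dist_set x S : R := inf [set edist x y | y in S].

Definition eball x (e : R) : set 'rV[R]_m := [set y | edist x y < e].

Definition einterior S : set 'rV[R]_m :=
  [set x | exists2 e : R, 0 < e & eball x e `<=` S].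

Definition affine_hull S : set 'rV[R]_m :=
  [set x | exists n (p : 'I_n -> 'rV[R]_m) (l : 'I_n -> R),
     (forall i, S (p i)) /\ \sum_(i < n) l i = 1 /\ x = \sum_(i < n) l i *: p i].

Definition conv_hull S : set 'rV[R]_m :=
  [set x | exists n (p : 'I_n -> 'rV[R]_m) (l : 'I_n -> R),
     (forall i, S (p i)) /\ (forall i, 0 <= l i) /\
     \sum_(i < n) l i = 1 /\ x = \sum_(i < n) l i *: p i].

Definition relint S : set 'rV[R]_m :=
  [set x | S x /\ exists2 e : R, 0 < e & eball x e `&` affine_hull S `<=` S].

Definition rational_point x := forall i, exists q : rat, x ord0 i = ratr q.

Definition rational_polytope S :=
  exists n (p : 'I_n -> 'rV[R]_m),
    (forall i, rational_point (p i)) /\ S = conv_hull [set p i | i in [set: 'I_n]].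

(* hyperplane {y | a.y = b}, a <> 0 *)
Definition hyperplane a (b : R) : set 'rV[R]_m := [set y | dot a y = b].

Definition separates (A B : set 'rV[R]_m) c (e : R) :=
  (A `<=` [set y | dot c y <= e] /\ B `<=` [set y | e <= dot c y]) \/
  (A `<=` [set y | e <= dot c y] /\ B `<=` [set y | dot c y <= e]).

(* angle in [0, pi/2] between hyperplanes with normals u, v *)
Definition hp_angle u v : R := acos (`|dot u v| / (enorm u * enorm v)).

(* theta(Q, H^1, Hbar), H^1 = {a1.y = b1}, H = {a.y = b}, Hbar = {b <= a.y} :
   maximum over hyperplanes H* with H* /\ H^1 = H /\ H^1 separating int Q
   from Hbar /\ H^1 of the angle between H^1 and H* *)
Definition theta S a1 (b1 : R) a (b : R) : R :=
  sup [set t | exists c (e : R), c != 0 /\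
     hyperplane c e `&` hyperplane a1 b1 = hyperplane a b `&` hyperplane a1 b1 /\
     separates (einterior S) ([set y | b <= dot a y] `&` hyperplane a1 b1) c e /\
     t = hp_angle a1 c].

End Geom.

(* Main.v *)
Require Import Defs.
From HB Require Import structures.
From mathcomp Require Import all_boot all_order all_algebra.
From mathcomp Require Import all_classical all_reals all_analysis.
Import Order.TTheory GRing.Theory Num.Theory.
From mathcomp Require Import ring lra.
Local Open Scope classical_set_scope.
Local Open Scope ring_scope.
Set Implicit Arguments. Unset Strict Implicit.


Section Dot.
Variables (R : realType) (m : nat).
Implicit Types (u v w x y : 'rV[R]_m).

Lemma dotC u v : dot u v = dot v u.
Proof. by apply: eq_bigr => i _; rewrite mulrC. Qed.
Lemma dotDr u v w : dot u (v + w) = dot u v + dot u w.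
Proof. by rewrite /dot -big_split; apply: eq_bigr => i _; rewrite mxE mulrDr. Qed.
Lemma dotBr u v w : dot u (v - w) = dot u v - dot u w.
Proof. by rewrite /dot -sumrB; apply: eq_bigr => i _; rewrite !mxE mulrBr. Qed.
Lemma dotZr u k v : dot u (k *: v) = k * dot u v.
Proof. by rewrite /dot mulr_sumr; apply: eq_bigr => i _; rewrite mxE mulrCA. Qed.
Lemma dot0r u : dot u 0 = 0.
Proof. by rewrite /dot big1 // => i _; rewrite mxE mulr0. Qed.
Lemma dotDl u v w : dot (v + w) u = dot v u + dot w u.
Proof. by rewrite dotC dotDr !(dotC u). Qed.
Lemma dotBl u v w : dot (v - w) u = dot v u - dot w u.
Proof. by rewrite dotC dotBr !(dotC u). Qed.
Lemma dotZl u k v : dot (k *: v) u = k * dot v u.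
Proof. by rewrite dotC dotZr dotC. Qed.
Lemma dot_ge0 u : 0 <= dot u u.
Proof. by apply: sumr_ge0 => i _; rewrite -expr2 sqr_ge0. Qed.
Lemma dot_eq0 u : dot u u = 0 -> u = 0.
Proof.
move=> /eqP; rewrite psumr_eq0 => [/allP H|i _]; last by rewrite -expr2 sqr_ge0.
apply/rowP => i; rewrite mxE; have /implyP := H i (mem_index_enum _).
by move=> /(_ isT); rewrite mulf_eq0 orbb => /eqP.
Qed.
Lemma dot_sumr c n (F : 'I_n -> 'rV[R]_m) :
  dot c (\sum_(i < n) F i) = \sum_(i < n) dot c (F i).
Proof. exact: (big_morph (dot c) (dotDr c) (dot0r c)). Qed.

Lemma enorm_ge0 u : 0 <= enorm u. Proof. exact: sqrtr_ge0. Qed.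
Lemma enorm_sq u : enorm u ^+ 2 = dot u u.
Proof. by rewrite sqr_sqrtr // dot_ge0. Qed.
Lemma enormZ k u : enorm (k *: u) = `|k| * enorm u.
Proof. by rewrite /enorm dotZl dotZr mulrA -expr2 sqrtrM ?sqr_ge0 // sqrtr_sqr. Qed.
Lemma enormN u : enorm (- u) = enorm u.
Proof. by rewrite -scaleN1r enormZ normrN normr1 mul1r. Qed.
Lemma edist_ge0 x y : 0 <= Defs.edist x y. Proof. exact: enorm_ge0. Qed.

Lemma CS u v : dot u v <= enorm u * enorm v.
Proof.
have [->|v0] := eqVneq v 0.
  by rewrite dot0r /enorm dot0r sqrtr0 mulr0.
have vv : 0 < dot v v.
  by rewrite lt_def dot_ge0 andbT; apply/eqP => /dot_eq0; apply/eqP.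
set k := dot u v / dot v v.
have := dot_ge0 (u - k *: v).
rewrite dotBl !dotBr !dotZl !dotZr (dotC v u).
have -> : dot u u - k * dot u v - (k * dot u v - k * (k * dot v v)) =
  dot u u - dot u v ^+ 2 / dot v v.
  by rewrite /k expr2; field; exact: lt0r_neq0.
rewrite subr_ge0 ler_pdivrMr // => H.
apply: (le_trans (ler_norm _)).
rewrite -(sqrtr_sqr (dot u v)) /enorm -sqrtrM ?dot_ge0 //.
by rewrite ler_sqrt // mulr_ge0 ?dot_ge0.
Qed.
End Dot.


Section Conv.
Variables (R : realType) (m : nat).

Lemma conv_step (S : set 'rV[R]_m) u w t : S u -> conv_hull S w -> 0 <= t <= 1 ->
  conv_hull S ((1 - t) *: u + t *: w).
Proof.
move=> Su [n [p [l [Sp [l0 [l1 ->]]]]]] /andP[t0 t1].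
exists n.+1, (fun k => if unlift ord0 k is Some k' then p k' else u),
  (fun k => if unlift ord0 k is Some k' then t * l k' else 1 - t).
split; first by move=> k; case: unlift.
split; first by move=> k; case: unlift => [k'|]; [rewrite mulr_ge0|rewrite subr_ge0].
split.
  rewrite big_ord_recl /= unlift_none.
  rewrite (eq_bigr (fun i => t * l i)); last by move=> i _; rewrite liftK.
  by rewrite -mulr_sumr l1 mulr1 subrK.
rewrite big_ord_recl /= unlift_none.
rewrite [in RHS](eq_bigr (fun i => (t * l i) *: p i)); last by move=> i _; rewrite liftK.
by rewrite scaler_sumr; congr (_ + _); apply: eq_bigr => i _; rewrite scalerA.
Qed.

Lemma interior_step (S : set 'rV[R]_m) u z t : S u ->
  einterior (conv_hull S) z -> 0 < t <= 1 ->
  einterior (conv_hull S) ((1 - t) *: u + t *: z).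
Proof.
move=> Su [r r0 Hr] /andP[t0 t1].
exists (t * r); first exact: mulr_gt0.
move=> y Hy.
set v := (1 - t) *: u + t *: z.
pose w := z + t^-1 *: (y - v).
have -> : y = (1 - t) *: u + t *: w.
  rewrite /w scalerDr scalerA mulfV ?gt_eqF // scale1r /v.
  by rewrite addrA subrKC.
apply: conv_step => //; last by rewrite t1 ltW.
apply: Hr; rewrite /eball /= /Defs.edist /w opprD addNKr enormN enormZ.
rewrite gtr0_norm ?invr_gt0 // -opprB enormN.
by rewrite ltr_pdivrMl // mulrC.
Qed.
End Conv.


Section Side.
Variables (R : realType) (m : nat).

Lemma side (S : set 'rV[R]_m) z c e :
  einterior (conv_hull S) z ->
  einterior (conv_hull S) `<=` [set y | dot c y <= e] ->
  conv_hull S `<=` [set y | dot c y <= e].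
Proof.
move=> zi Hi.
have HS : forall u, S u -> dot c u <= e.
  move=> u Su; rewrite leNgt; apply/negP => ce.
  set d := dot c u - e.
  set K := `|dot c u - dot c z|.
  have d0 : 0 < d by rewrite subr_gt0.
  have K0 : 0 <= K by apply: normr_ge0.
  have Kd : 0 < K + d by lra.
  set t := d / (K + d).
  have t0 : 0 < t by apply: divr_gt0.
  have t1 : t <= 1 by rewrite /t ler_pdivrMr // mul1r; lra.
  have := Hi _ (interior_step Su zi (introT andP (conj t0 t1))).
  rewrite /= dotDr !dotZr => H.
  have : d <= t * (dot c u - dot c z) by rewrite /d; lra.
  have : t * (dot c u - dot c z) <= t * K by rewrite ler_pM2l // ler_norm.
  have : t * K < d.
    rewrite /t mulrAC ltr_pdivrMr // mulrDr mulrC.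
    have : 0 < d * d by apply: mulr_gt0.
    lra.
  lra.
move=> y [n [p [l [Sp [l0 [l1 ->]]]]]] /=.
rewrite dot_sumr.
apply: (@le_trans _ _ (\sum_(i < n) l i * e)).
  apply: ler_sum => i _; rewrite dotZr; apply: ler_wpM2l; [exact: l0 | exact: HS].
by rewrite -big_distrl /= l1 mul1r.
Qed.
End Side.


Section Key.
Variables (R : realType) (m : nat).
Implicit Types (u v x y c : 'rV[R]_m).

Lemma CSabs u v : `|dot u v| <= enorm u * enorm v.
Proof.
rewrite ler_norml CS andbT.
have := CS ((-1) *: u) v; rewrite dotZl enormZ normrN normr1 mul1r; lra.
Qed.

Lemma dot_gt0 u : u != 0 -> 0 < dot u u.
Proof. by move=> u0; rewrite lt_def dot_ge0 andbT; apply/eqP => /dot_eq0; apply/eqP. Qed.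

Lemma enorm_gt0 u : u != 0 -> 0 < enorm u.
Proof. by move=> u0; rewrite sqrtr_gt0 dot_gt0. Qed.

Lemma dist_set_ge0 x (S : set 'rV[R]_m) : S !=set0 -> lbound [set Defs.edist x y | y in S] (dist_set x S) /\ 0 <= dist_set x S.
Proof.
move=> [y0 Sy0]; split.
  apply: ge_inf; exists 0 => _ [y Sy <-]; exact: enorm_ge0.
apply: lb_le_inf; first by exists (Defs.edist x y0), y0.
by move=> _ [y Sy <-]; exact: enorm_ge0.
Qed.

Lemma dist_key (Q L : set 'rV[R]_m) x a1 b1 c e :
  c != 0 -> a1 != 0 -> dot a1 x = b1 -> e <= dot c x ->
  Q `<=` [set y | dot c y <= e] -> Q !=set0 ->
  hyperplane c e `&` hyperplane a1 b1 `<=` L -> L !=set0 ->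
  dist_set x L * sin (hp_angle a1 c) <= dist_set x Q.
Proof.
move=> c0 a0 xa1 ex HQ Qn HL Ln.
set g := dot c x - e.
have g0 : 0 <= g by rewrite /g subr_ge0.
have Nc0 := enorm_gt0 c0.
have Na0 := enorm_gt0 a0.
have dQ : g / enorm c <= dist_set x Q.
  case: Qn => [y0 Qy0].
  apply: lb_le_inf; first by exists (Defs.edist x y0), y0.
  move=> _ [y Qy <-]; rewrite ler_pdivrMr // /Defs.edist.
  have := CS c (x - y); rewrite dotBr; have := HQ _ Qy; rewrite /g /=; lra.
apply: le_trans dQ.
have [lbL DL0] := dist_set_ge0 x Ln.
set al := `|dot a1 c| / (enorm a1 * enorm c).
have al0 : 0 <= al by rewrite /al divr_ge0 // mulr_ge0 // enorm_ge0.
have al1 : al <= 1 by rewrite /al ler_pdivrMr ?mulr_gt0 // mul1r CSabs.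
have -> : sin (hp_angle a1 c) = Num.sqrt (1 - al ^+ 2).
  rewrite /hp_angle sin_acos //. by rewrite -/al al1 andbT; lra.
set s := Num.sqrt (1 - al ^+ 2).
have s0 : 0 <= s by apply: sqrtr_ge0.
set k := dot a1 c / dot a1 a1.
set c' := c - k *: a1.
have aa0 := dot_gt0 a0.
have cc : dot c' c' = (s * enorm c) ^+ 2.
  rewrite exprMn sqr_sqrtr; last by rewrite subr_ge0 expr_le1.
  rewrite enorm_sq /al expr_div_n exprMn !enorm_sq real_normK ?num_real //. 
  rewrite /c' !(dotBl, dotBr, dotZl, dotZr) (dotC c a1) /k.
  field; apply/andP; split; apply: lt0r_neq0 => //; exact: dot_gt0.
have [c'0|c'n0] := eqVneq c' 0.
  have : s * enorm c = 0.
    apply/eqP; rewrite -sqrf_eq0 -cc c'0 dot0r //.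
  move/eqP; rewrite mulf_eq0 (gt_eqF Nc0) orbF => /eqP ->.
  by rewrite mulr0 divr_ge0 // ltW.
have c'c'0 := dot_gt0 c'n0.
set y0 := x - (g / dot c' c') *: c'.
have Ly0 : L y0.
  apply: HL; split; rewrite /hyperplane /= /y0 dotBr dotZr.
    have -> : dot c c' = dot c' c'.
      rewrite /c' dotBl !dotBr !dotZr !dotZl (dotC c a1) /k; field; exact: lt0r_neq0.
    rewrite mulfVK ?lt0r_neq0 // /g; lra.
  have -> : dot a1 c' = 0.
    rewrite /c' dotBr dotZr /k; field; exact: lt0r_neq0.
  by rewrite mulr0 subr0.
have Dle : dist_set x L <= Defs.edist x y0 by apply: lbL; exists y0.
have e0 : Defs.edist x y0 * (s * enorm c) = g.
  rewrite /Defs.edist /y0 opprB addrC subrK enormZ ger0_norm; last first.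
    by rewrite divr_ge0 // ltW.
  have Nc' : enorm c' = s * enorm c.
    by rewrite /enorm cc sqrtr_sqr ger0_norm // mulr_ge0 // ltW.
  rewrite -Nc' -mulrA -expr2 enorm_sq mulfVK //; exact: lt0r_neq0.
rewrite ler_pdivlMr // -e0 -mulrA.
by rewrite ler_wpM2r // mulr_ge0 // ltW.
Qed.
End Key.


Lemma sup_step (R : realType) (T : set R) (D d : R) :
  0 <= D -> 0 <= d -> T `<=` [set t | 0 <= t <= pi] ->
  (forall t, T t -> D * sin t <= d) -> D * sin (sup T) <= d.
Proof.
move=> D0 d0 Tb HT.
have [Tn|Tn] := pselect (T !=set0); last first.
  have -> : T = set0 by apply/seteqP; split => // t Tt; exfalso; apply: Tn; exists t.
  by rewrite sup0 sin0 mulr0.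
set s := sup T.
rewrite leNgt; apply/negP => H.
set gap := D * sin s - d.
have gap0 : 0 < gap by rewrite /gap subr_gt0.
set eps := gap / (D + 1).
have eps0 : 0 < eps by rewrite /eps divr_gt0 // ltr_wpDl.
have hs : has_sup T by split => //; exists pi => t /Tb /andP[].
have := @continuous_sin R s.
move/cvgrPdist_lt => /(_ eps eps0) /nbhs_ballP [del del0 Hdel].
have [t Tt st] := sup_adherent del0 hs.
have ts : t <= s by apply: sup_upper_bound.
move: st; rewrite -/s => st.
have := Hdel t; rewrite /ball /= => /(_ _).
have : `|s - t| < del by rewrite ger0_norm ?subr_ge0 //; lra.
move=> h /(_ h) => hsin.
have := HT t Tt.
have : sin s < sin t + eps.
  have := ler_norm (sin s - sin t); lra.
move=> h2 h3.
have h4 : D * sin s <= D * sin t + D * eps.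
  by rewrite -mulrDr ler_wpM2l // ltW.
have h5 : D * eps < gap.
  rewrite /eps mulrA ltr_pdivrMr ?ltr_wpDl //.
  nra.
rewrite /gap in h5; lra.
Qed.


Lemma dotNr (R : realType) m (u v : 'rV[R]_m) : dot u (- v) = - dot u v.
Proof. by rewrite -scaleN1r dotZr mulN1r. Qed.

Lemma dotNl (R : realType) m (u v : 'rV[R]_m) : dot (- v) u = - dot v u.
Proof. by rewrite -scaleN1r dotZl mulN1r. Qed.

Lemma hp_angle_bd (R : realType) m (a1 c : 'rV[R]_m) : a1 != 0 -> c != 0 ->
  0 <= hp_angle a1 c <= pi.
Proof.
move=> a0 c0.
have Nc0 := enorm_gt0 c0; have Na0 := enorm_gt0 a0.
have al0 : 0 <= `|dot a1 c| / (enorm a1 * enorm c) by rewrite divr_ge0 // mulr_ge0 // enorm_ge0.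
have al1 : `|dot a1 c| / (enorm a1 * enorm c) <= 1 by rewrite ler_pdivrMr ?mulr_gt0 // mul1r CSabs.
have h : -1 <= `|dot a1 c| / (enorm a1 * enorm c) <= 1 by rewrite al1 andbT; lra.
by rewrite /hp_angle acos_ge0 // acos_lepi.
Qed.

Lemma hp_angleN (R : realType) m (a1 c : 'rV[R]_m) : hp_angle a1 (- c) = hp_angle a1 c.
Proof. by rewrite /hp_angle dotNr normrN enormN. Qed.

Unset Implicit Arguments. Set Strict Implicit.
Theorem lemma3 (R : realType) (m : nat) (hm : (2 <= m)%N)
  (Q : set 'rV[R]_m) (hQ : rational_polytope Q) (hfull : einterior Q !=set0)
  (a1 : 'rV[R]_m) (b1 : R) (ha1 : a1 != 0)
  (hQ1 : (Q `&` hyperplane a1 b1) !=set0)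
  (a : 'rV[R]_m) (b : R) (ha : a != 0)
  (hHH1 : hyperplane a b <> hyperplane a1 b1)
  (hsupp : Q `&` hyperplane a1 b1 `<=` [set y | dot a y <= b])
  (hface : (Q `&` hyperplane a1 b1 `&` hyperplane a b) !=set0)
  (hHbar : ~ (Q `&` hyperplane a1 b1 `<=` [set y | b <= dot a y]))
  (xbar : 'rV[R]_m)
  (hx : relint ([set y | b <= dot a y] `&` hyperplane a1 b1) xbar) :
  dist_set xbar (hyperplane a b `&` hyperplane a1 b1) * sin (theta Q a1 b1 a b)
    <= dist_set xbar Q.
Proof.
case: hQ => n [p [_ QE]].
case: hfull => z zi.
have sideQ : forall c e, einterior Q `<=` [set y | dot c y <= e] -> Q `<=` [set y | dot c y <= e].
  move=> c e; rewrite QE; apply: side; rewrite -QE; exact: zi.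
have Qn : Q !=set0 by case: hQ1 => y [Qy _]; exists y.
have Ln : (hyperplane a b `&` hyperplane a1 b1) !=set0.
  by case: hface => y [[_ h1] h]; exists y.
case: hx => Hx _.
have xa1 : dot a1 xbar = b1 by case: Hx.
have [_ DL0] := dist_set_ge0 xbar Ln.
have [_ DQ0] := dist_set_ge0 xbar Qn.
rewrite /theta; apply: sup_step => //.
  by move=> t [c [e [c0 [_ [_ ->]]]]]; apply: hp_angle_bd.
move=> t [c [e [c0 [hE [hsep ->]]]]].
case: hsep => [[h1 h2]|[h1 h2]].
  apply: (dist_key c0 ha1 xa1 (h2 _ Hx)) => //.
    exact: sideQ h1.
  by rewrite hE.
rewrite -hp_angleN.
apply: (@dist_key _ _ _ _ _ _ _ _ (- e) _ ha1 xa1) => //.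
- by rewrite oppr_eq0.
- by rewrite dotNl lerN2; apply: h2.
- apply: sideQ => y /h1 /=; rewrite dotNl; lra.
- move=> y [hy1 hy2]; rewrite -hE; split => //.
  by move: hy1; rewrite /hyperplane /= dotNl => /eqP; rewrite eqr_opp => /eqP.
Qed.
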